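(* Let $n\ge1$ and $\lambda\in\mathcal O(n)$, and let $\mu=\mathrm{Syl}(\lambda)\in\mathcal D(n)$ be the image of $\lambda$ under Sylvester's bijection. Then $\lambda^2\in\mathcal O(2n)$ and $\Phi(\lambda^2)=2\mu:=(2\mu_1,2\mu_2,\dots,2\mu_{\ell(\mu)})$.
   Context: A partition $\lambda$ of $n$ is a non-increasing sequence $\lambda=(\lambda_1,\dots,\lambda_\ell)$ of positive integers with sum $n$; $\ell(\lambda)=\ell$ is its length, and by convention $\lambda_j=0$ for $j>\ell$. $\mathcal O(n)$ is the set of partitions of $n$ all of whose parts are odd; $\mathcal D(n)$ is the set of partitions of $n$ with distinct parts. $m_i(\lambda)$ is the multiplicity of $i$ as a part of $\lambda$. The conjugate $\lambda'$ is given by $\lambda'_i=\#\{j:\lambda_j\ge i\}$. For partitions $\alpha,\beta$, $\alpha\circ\beta$ is the partition whose parts are all parts of $\alpha$ and of $\beta$ in non-increasing order, and $\alpha^2=\alpha\circ\alpha=(\alpha_1,\alpha_1,\alpha_2,\alpha_2,\dots)$. Sylvester's bijection $\mathrm{Syl}:\mathcal O(n)\to\mathcal D(n)$: for $\lambda\in\mathcal O(n)$ let $d=\max\{j:\lambda_j\ge 2j-1\}$; set $\epsilon=0$ if $\lambda_d>2d-1$ and $\epsilon=1$ if $\lambda_d=2d-1$. Then $\mathrm{Syl}(\lambda)=\mu$ has $2d-\epsilon$ parts given by $\mu_{2j-1}=\frac{\lambda_j+1}{2}+\lambda'_{2j-1}-2j+1$ for $j=1,\dots,d$, and $\mu_{2j}=\frac{\lambda_j-1}{2}+\lambda'_{2j+1}-2j+1$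 for $j=1,\dots,d-\epsilon$. Bressoud's map $B$: for $\beta\in\mathcal O(n)\cap\mathcal D(n)$, decompose the parts of $\beta$ into runs (maximal sequences of consecutive odd integers all occurring as parts of $\beta$). For a run $2m-1>\dots>2m-2k+1$ form pairs $(2m-1,2m-3),(2m-5,2m-7),\dots$ from the largest term; if $k$ is odd the remaining smallest term $c$ becomes the pair $(\frac{c+1}{2},\frac{c-1}{2})$. Concatenate all pairs (runs in decreasing order) into $\pi=(\pi_1,\dots,\pi_{2s})$ with pairs $(\pi_{2j-1},\pi_{2j})$. A pair interchange replaces adjacent pairs $(a+1,a),(2b+1,2b-1)$ in positions $2j-1,\dots,2j+2$ with $a\le 2b+1$ by $(2b+3,2b+1,a-1,a-2)$. Apply pair interchanges (leftmost first) until none is possible and delete zero entries to get $B(\beta)$; $B$ of the empty partition is empty. Insertion: for a partition $\gamma$ (with $\gamma_k=0$ for $k>\ell(\gamma)$) and an integer $a\ge1$, define $I_a(\gamma)$: for $j=0,1,2,\dots$ in turn, if $j=a-1$ set $I_a(\gamma)=(\gamma_1+2,\dots,\gamma_{2j}+2,\gamma_{2j+1}+2,\gamma_{2j+2},\dots)$ and stop; otherwise, if $2a-2j-2>\gamma_{2j+1}$ set $I_a(\gamma)=(\gamma_1+2,\dots,\gamma_{2j}+2,2a-2j,2a-2j-2,\gamma_{2j+1},\gamma_{2j+2},\dots)$ and stop; otherwise pass to $j+1$. Zero entries are discarded. The map $\Phi:\mathcal O(n)\to\mathcal D(n)$: for $\lambda\in\mathcal O(n)$ write uniquely $\lambda=\alpha^2\circ\beta$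 with $\beta$ having distinct parts. Let $t=\ell(\alpha)$, $\alpha_i=2a_i-1$. Set $\gamma^{(0)}=B(\beta)$, $\gamma^{(i)}=I_{a_i}(\gamma^{(i-1)})$ for $i=1,\dots,t$, and $\Phi(\lambda)=\gamma^{(t)}$. *)

(* Defs.v *)
(* Partitions are represented as sequences of naturals
   (parts listed in non-increasing order); lambda_j = nth 0 lambda (j-1). *)
From mathcomp Require Import all_boot.
Set Implicit Arguments. Unset Strict Implicit. Unset Printing Implicit Defensive.

Definition is_partition (n : nat) (l : seq nat) : bool :=
  [&& sorted geq l, all (fun x => 0 < x) l & sumn l == n].

Definition in_O (n : nat) (l : seq nat) : bool := is_partition n l && all odd l.

Definition in_D (n : nat) (l : seq nat) : bool := is_partition n l && uniq l.

(* the j-th part (1-based), 0 beyond the length *)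
Definition part (l : seq nat) (j : nat) : nat := nth 0 l j.-1.

Definition conj_part (l : seq nat) (i : nat) : nat := count (fun x => i <= x) l.

Definition psq (l : seq nat) : seq nat := flatten [seq [:: x; x] | x <- l].

Definition pdouble (l : seq nat) : seq nat := [seq 2 * x | x <- l].

(* d = max { j : lambda_j >= 2j - 1 }  (0 if no such j) *)
Definition syl_d (l : seq nat) : nat :=
  foldr maxn 0 [seq j.+1 | j <- iota 0 (size l) & (2 * j).+1 <= nth 0 l j].

Definition syl_eps (l : seq nat) : bool := part l (syl_d l) == (2 * syl_d l).-1.

Definition syl_odd (l : seq nat) (j : nat) : nat :=
  (part l j).+1./2 + conj_part l (2 * j).-1 + 1 - 2 * j.
Definition syl_even (l : seq nat) (j : nat) : nat :=
  (part l j).-1./2 + conj_part l (2 * j).+1 + 1 - 2 * j.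

Definition Syl (l : seq nat) : seq nat :=
  let d := syl_d l in
  flatten [seq (if (j == d) && syl_eps l then [:: syl_odd l j]
                else [:: syl_odd l j; syl_even l j]) | j <- iota 1 d].

(* decomposition of a decreasing seq of odd numbers into maximal runs of
   consecutive odd integers *)
Fixpoint runs (s : seq nat) : seq (seq nat) :=
  match s with
  | [::] => [::]
  | x :: s' =>
    match runs s' with
    | (y :: r) :: rs => if y + 2 == x then (x :: y :: r) :: rs
                        else [:: x] :: (y :: r) :: rs
    | rs => [:: x] :: rs
    end
  end.

Fixpoint run_pairs (r : seq nat) : seq nat :=
  match r with
  | x :: y :: r' => x :: y :: run_pairs r'
  | [:: c] => [:: c.+1./2; c./2]
  | [::] => [::]
  end.

Definition bressoud_pi (b : seq nat) : seq nat :=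
  flatten [seq run_pairs r | r <- runs b].

Fixpoint interchange (p : seq nat) : option (seq nat) :=
  match p with
  | x1 :: x2 :: rest =>
    match rest with
    | x3 :: x4 :: tl =>
      if [&& x1 == x2.+1, odd x3, x4 + 2 == x3 & x2 <= x3]
      then Some (x3.+2 :: x3 :: x2.-1 :: x2.-2 :: tl)
      else option_map (fun q => x1 :: x2 :: q) (interchange rest)
    | _ => None
    end
  | _ => None
  end.

Fixpoint interchange_iter (fuel : nat) (p : seq nat) : seq nat :=
  match fuel with
  | 0 => p
  | f.+1 => match interchange p with
            | Some q => interchange_iter f q
            | None => p
            end
  end.

(* Each interchange swaps a "(a+1,a)"-pair with the following odd pair, so the
   number of interchanges is at most (#pairs)^2 <= (size pi)^2; the fuel below
   therefore always suffices to reach the state where none is possible. *)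
Definition B (b : seq nat) : seq nat :=
  let p := bressoud_pi b in
  [seq x <- interchange_iter ((size p) ^ 2).+1 p | x != 0].

(* first j in 0..a-2 with 2a-2j-2 > gamma_{2j+1}, and a-1 if there is none *)
Definition ins_j (a : nat) (g : seq nat) : nat :=
  find (fun j => nth 0 g (2 * j) < 2 * a - 2 * j - 2) (iota 0 a.-1).

Definition ins (a : nat) (g : seq nat) : seq nat :=
  let j := ins_j a g in
  let g' := g ++ nseq (2 * a) 0 in
  [seq x <- (if j == a.-1 then
               [seq x + 2 | x <- take (2 * j).+1 g'] ++ drop (2 * j).+1 g'
             else
               [seq x + 2 | x <- take (2 * j) g'] ++
               [:: 2 * a - 2 * j; 2 * a - 2 * j - 2] ++ drop (2 * j) g')
  | x != 0].

(* lambda = alpha^2 o beta with beta having distinct parts *)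
Definition phi_alpha (l : seq nat) : seq nat :=
  flatten [seq nseq (count_mem v l)./2 v | v <- undup l].
Definition phi_beta (l : seq nat) : seq nat :=
  [seq v <- undup l | odd (count_mem v l)].

(* gamma^(0) = B beta, gamma^(i) = I_{a_i}(gamma^(i-1)), alpha_i = 2 a_i - 1 *)
Definition Phi (l : seq nat) : seq nat :=
  foldl (fun g x => ins x.+1./2 g) (B (phi_beta l)) (phi_alpha l).

(* Main.v *)
Require Import Defs.
From mathcomp Require Import all_boot zify.
Set Implicit Arguments. Unset Strict Implicit. Unset Printing Implicit Defensive.

Lemma geq_trans : transitive geq.
Proof. move=> a b c /= H1 H2; exact: leq_trans H2 H1. Qed.

Definition mono (s : seq nat) := forall i j, i <= j -> nth 0 s j <= nth 0 s i.

Lemma mono_sorted s : sorted geq s -> mono s.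
Proof.
move=> Hs i j ij.
case: (ltnP j (size s)) => js; last by rewrite nth_default.
have := @sorted_leq_nth _ geq geq_trans (fun x => leqnn x) 0 s Hs i j.
rewrite !inE => H; apply: H => //; lia.
Qed.

Lemma psq_cons x l : psq (x :: l) = x :: x :: psq l.
Proof. by []. Qed.

Lemma count_psq p l : count p (psq l) = 2 * count p l.
Proof. elim: l => // x l IH; rewrite psq_cons /= IH; lia. Qed.

Lemma sumn_psq l : sumn (psq l) = 2 * sumn l.
Proof. elim: l => // x l IH; rewrite psq_cons /= IH; lia. Qed.

Lemma all_psq p l : all p (psq l) = all p l.
Proof. elim: l => // x l IH; rewrite psq_cons /= IH; by case: (p x). Qed.

Lemma mem_psq y l : (y \in psq l) = (y \in l).
Proof. by rewrite -!has_pred1 !has_count count_psq muln_gt0. Qed.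

Lemma undup_psq l : undup (psq l) = undup l.
Proof.
elim: l => // x l IH; rewrite psq_cons /= inE eqxx /= mem_psq.
by case: (x \in l) => //; rewrite IH.
Qed.

Lemma path_psq x l : path geq x l -> path geq x (psq l).
Proof.
elim: l x => // y l IH x; rewrite psq_cons => /= /andP [xy Hp].
rewrite xy leqnn /=. exact: IH.
Qed.

Lemma sorted_psq l : sorted geq l -> sorted geq (psq l).
Proof. case: l => // x l Hp; rewrite psq_cons /= leqnn; exact: path_psq. Qed.

Definition G (c : nat -> nat) (u : seq nat) := flatten [seq nseq (c v) v | v <- u].

Lemma undup_head x t : sorted geq t -> all (fun y => y <= x) t -> x \in t ->
  exists w, undup t = x :: w /\ x \notin w.
Proof.
elim: t => //= y t IH Hs Ha Hx.
move/andP: Ha => [yx Ha].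
have Hst : sorted geq t by move: Hs; case: t {IH Ha Hx} => //= z t /andP [].
case: ifP => yt.
  apply: IH => //. move: Hx; rewrite inE => /orP [/eqP ->|] //.
have xy : x = y.
  move: Hx; rewrite inE => /orP [/eqP -> //|xt].
  have := order_path_min geq_trans Hs => /allP /(_ x xt) => H; lia.
subst y; exists (undup t); split => //; by rewrite mem_undup yt.
Qed.

Lemma phi_alpha_sorted s : sorted geq s ->
  flatten [seq nseq (count_mem v s) v | v <- undup s] = s.
Proof.
elim: s => //= x t IH Hs.
have Hst : sorted geq t by move: Hs; case: t {IH} => //= z t /andP [].
have Hall : all (fun y => y <= x) t.
  by have := order_path_min geq_trans Hs; apply: sub_all => y.
case: ifP => xt.
  have [w [Hw xw]] := undup_head Hst Hall xt.
  rewrite Hw /= eqxx add1n /=. congr (_ :: _).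
  transitivity (flatten [seq nseq (count_mem v t) v | v <- undup t]); last exact: IH.
  rewrite Hw /=. congr (_ ++ _). congr flatten.
  apply/eq_in_map => v vw /=. have : v != x by apply/negP => /eqP E; subst v; rewrite vw in xw.
  by rewrite eq_sym => /negbTE ->.
rewrite /= eqxx /= (count_memPn (negbT xt)) /=. congr (_ :: _).
transitivity (flatten [seq nseq (count_mem v t) v | v <- undup t]); last exact: IH.
congr flatten. apply/eq_in_map => v vt /=.
have : v != x by apply/negP => /eqP E; subst v; rewrite mem_undup xt in vt.
by rewrite eq_sym => /negbTE ->.
Qed.

Lemma phi_alpha_psq l : sorted geq l -> phi_alpha (psq l) = l.
Proof.
move=> Hs; rewrite /phi_alpha undup_psq.
transitivity (flatten [seq nseq (count_mem v l) v | v <- undup l]); last exact: phi_alpha_sorted.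
congr flatten; apply/eq_in_map => v _; rewrite count_psq; by rewrite mul2n doubleK.
Qed.

Lemma phi_beta_psq l : phi_beta (psq l) = [::].
Proof.
rewrite /phi_beta; apply/eqP; rewrite -[_ == _]negbK -has_filter; apply/hasPn => v _.
by rewrite count_psq oddM.
Qed.

Lemma B_nil : B [::] = [::].
Proof. by []. Qed.

Definition Fn (fo fe : nat -> nat) i := if odd i then fe (i./2).+1 else fo (i./2).+1.

Lemma Fn_even fo fe m : Fn fo fe (2 * m) = fo m.+1.
Proof. rewrite /Fn oddM /=; congr fo; lia. Qed.
Lemma Fn_odd fo fe m : Fn fo fe (2 * m).+1 = fe m.+1.
Proof. rewrite /Fn /= oddM /=; congr fe; lia. Qed.

Lemma iota1S m : iota 1 m.+1 = iota 1 m ++ [:: m.+1].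
Proof.
have H : forall a m, iota a m.+1 = iota a m ++ [:: a + m].
  by move=> a k; rewrite -addn1 iotaD.
by rewrite H add1n.
Qed.

Lemma flat_aux (d : nat) (e : bool) fo fe m : m < d ->
  flatten [seq (if (j == d) && e then [:: fo j] else [:: fo j; fe j]) | j <- iota 1 m]
  = mkseq (Fn fo fe) (2 * m).
Proof.
elim: m => [//|m IH] lt.
rewrite iota1S map_cat flatten_cat IH; last lia.
rewrite /=. have -> : (m.+1 == d) = false by apply/eqP; lia.
rewrite /= (_ : 2 * m.+1 = (2 * m).+1.+1); last lia.
by rewrite !mkseqS -!cats1 -catA /= Fn_even Fn_odd.
Qed.

Lemma flat_mkseq (d : nat) (e : bool) fo fe :
  flatten [seq (if (j == d) && e then [:: fo j] else [:: fo j; fe j]) | j <- iota 1 d]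
  = mkseq (Fn fo fe) (2 * d - e).
Proof.
case: d => [|m]; first by rewrite muln0.
rewrite iota1S map_cat flatten_cat (@flat_aux m.+1); last lia.
rewrite /= eqxx /=.
case: e => /=.
  rewrite (_ : 2 * m.+1 - 1 = (2 * m).+1); last lia.
  by rewrite mkseqS -cats1 Fn_even.
rewrite (_ : 2 * m.+1 - 0 = (2 * m).+1.+1); last lia.
by rewrite !mkseqS -!cats1 -catA /= Fn_even Fn_odd.
Qed.

Definition F l := Fn (syl_odd l) (syl_even l).
Definition Ls l := 2 * syl_d l - syl_eps l.

Lemma SylE l : Syl l = mkseq (F l) (Ls l).
Proof. exact: flat_mkseq. Qed.

Lemma foldr_maxS m D : foldr maxn 0 [seq j.+1 | j <- iota m D] = if D is 0 then 0 else m + D.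
Proof.
elim: D m => [//|D IH] m /=. rewrite IH. case: D {IH} => [|D]; lia.
Qed.

Lemma dP l : mono l ->
  (forall j, j < syl_d l -> (2 * j).+1 <= nth 0 l j) /\ nth 0 l (syl_d l) < (2 * syl_d l).+1.
Proof.
move=> Hm.
pose P := fun j => nth 0 l j < (2 * j).+1.
have exP : exists n, P n by exists (size l); rewrite /P nth_default.
case: (ex_minnP exP) => D PD Dmin.
have below : forall j, j < D -> (2 * j).+1 <= nth 0 l j.
  move=> j jD; case: (leqP (2 * j).+1 (nth 0 l j)) => // H.
  have := Dmin j H; lia.
have above : forall j, D <= j -> ~~ ((2 * j).+1 <= nth 0 l j).
  move=> j Dj; rewrite -ltnNge; have := Hm _ _ Dj; move: PD; rewrite /P; lia.
have Dk : D <= size l.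
  case: (leqP D (size l)) => // H; have := below _ H; rewrite nth_default //.
have -> : syl_d l = D.
  rewrite /syl_d (_ : [seq j <- iota 0 (size l) | (2 * j).+1 <= nth 0 l j] = iota 0 D).
    by rewrite foldr_maxS; case: D {PD Dmin below above Dk}.
  rewrite -(subnKC Dk) iotaD filter_cat add0n.
  rewrite (_ : [seq j <- iota D (size l - D) | _] = [::]).
    rewrite cats0; apply/all_filterP/allP => j; rewrite mem_iota => /andP [_ ?]; apply: below; lia.
  apply/eqP; rewrite -[_ == _]negbK -has_filter; apply/hasPn => j; rewrite mem_iota => /andP [? _].
  exact: above.
by split.
Qed.

Lemma find_iota_at (P : pred nat) n m : m <= n -> (forall j, j < m -> ~~ P j) ->
  (m < n -> P m) -> find P (iota 0 n) = m.
Proof.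
move=> mn H1 H2. rewrite -(subnKC mn) iotaD find_cat.
have -> : has P (iota 0 m) = false.
  by apply/negbTE/hasPn => j; rewrite mem_iota => /andP [_ ?]; apply: H1; lia.
rewrite size_iota add0n. case E: (n - m) => [|r] /=; first by rewrite addn0.
rewrite H2 ?addn0 //; lia.
Qed.

Lemma take_drop_mkseq (g : seq nat) m : m <= size g ->
  [seq y + 2 | y <- take m g] ++ drop m g = mkseq (fun i => nth 0 g i + 2 * (i < m)) (size g).
Proof.
move=> mg; apply: (eq_from_nth (x0:=0)).
  by rewrite size_cat size_map size_takel // size_drop size_mkseq; lia.
move=> i; rewrite size_cat size_map size_takel // size_drop => Hi.
rewrite nth_mkseq; last lia.
rewrite nth_cat size_map size_takel //. case: ifP => him.
  by rewrite (nth_map 0) ?size_takel // nth_take // ?him muln1.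
rewrite nth_drop ?him muln0 addn0; congr nth; lia.
Qed.

Lemma filter_mkseq (h : nat -> nat) M N : M <= N -> (forall i, i < M -> h i != 0) ->
  (forall i, M <= i < N -> h i = 0) -> [seq y <- mkseq h N | y != 0] = mkseq h M.
Proof.
move=> MN H1 H2. rewrite /mkseq -(subnKC MN) iotaD map_cat filter_cat.
have -> : [seq y <- [seq h i | i <- iota (0 + M) (N - M)] | y != 0] = [::].
  apply/eqP; rewrite -[_ == _]negbK -has_filter; apply/hasPn => y /mapP [i].
  rewrite mem_iota => /andP [? ?] ->; rewrite H2 //; lia.
rewrite cats0; apply/all_filterP/allP => y /mapP [i]; rewrite mem_iota => /andP [_ ?] ->.
apply: H1; lia.
Qed.

Lemma eq_in_mkseq (T : Type) (h h' : nat -> T) M : (forall i, i < M -> h i = h' i) -> mkseq h M = mkseq h' M.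
Proof. move=> H; apply/eq_in_map => i; rewrite mem_iota => /andP [_ ?]; apply: H; lia. Qed.

Lemma conj_ge l c j : mono l -> j <= size l -> (0 < j -> c <= nth 0 l j.-1) ->
  j <= conj_part l c.
Proof.
move=> Hm jl H. rewrite /conj_part -(cat_take_drop j l) count_cat.
have : count (fun y => c <= y) (take j l) = j.
  apply/eqP; rewrite -{2}(size_takel jl) -all_count; apply/(all_nthP 0) => i.
  rewrite size_takel // => ij. rewrite nth_take //.
  apply: leq_trans (H _) (Hm _ _ _); lia.
lia.
Qed.

Lemma conj_all l c : (forall j, j < size l -> c <= nth 0 l j) -> conj_part l c = size l.
Proof. by move=> H; apply/eqP; rewrite -all_count; apply/(all_nthP 0). Qed.

Lemma d_unique l D : mono l -> (forall j, j < D -> (2 * j).+1 <= nth 0 l j) ->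
  nth 0 l D < (2 * D).+1 -> syl_d l = D.
Proof.
move=> Hm H1 H2; have [d1 d2] := dP Hm.
case: (ltngtP (syl_d l) D) => // H.
  have := H1 _ H; lia.
have := d1 _ H; lia.
Qed.

Lemma oddE y : odd y -> y = (2 * y./2).+1.
Proof. move=> H; have := odd_double_half y; rewrite H; lia. Qed.

Lemma Ls_bounds l : 2 * syl_d l <= (Ls l).+1 /\ Ls l <= 2 * syl_d l.
Proof. rewrite /Ls; case: (syl_eps l); lia. Qed.

Lemma Fl_even l m : mono l -> (forall j, j < size l -> odd (nth 0 l j)) -> 2 * m < Ls l ->
  [/\ F l (2 * m) + 2 * m.+1 = (nth 0 l m).+1./2 + conj_part l (2 * m).+1 + 1,
      1 <= F l (2 * m) & m < syl_d l].
Proof.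
move=> Hm Ho Hi. have [d1 d2] := dP Hm. have [b1 b2] := Ls_bounds l.
have md : m < syl_d l by lia.
have Hp := d1 _ md.
have mk : m < size l. case: (ltnP m (size l)) => // H; move: Hp; rewrite nth_default //.
have Hc : m.+1 <= conj_part l (2 * m).+1 by apply: conj_ge.
have e1 : part l m.+1 = nth 0 l m by [].
have e2 : conj_part l (2 * m.+1).-1 = conj_part l (2 * m).+1 by congr conj_part; lia.
rewrite /F Fn_even /syl_odd e1 e2.
have := oddE (Ho _ mk); set p := nth 0 l m => Ep.
split; lia.
Qed.

Lemma Fl_odd l m : mono l -> (forall j, j < size l -> odd (nth 0 l j)) -> (2 * m).+1 < Ls l ->
  [/\ F l (2 * m).+1 + 2 * m.+1 = (nth 0 l m).-1./2 + conj_part l (2 * m.+1).+1 + 1,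
      1 <= F l (2 * m).+1 & m < syl_d l].
Proof.
move=> Hm Ho Hi. have [d1 d2] := dP Hm. have [b1 b2] := Ls_bounds l.
have md : m < syl_d l by lia.
have Hp := d1 _ md.
have mk : m < size l. case: (ltnP m (size l)) => // H; move: Hp; rewrite nth_default //.
have e1 : part l m.+1 = nth 0 l m by [].
rewrite /F Fn_odd /syl_even e1.
have := oddE (Ho _ mk); set p := nth 0 l m => Ep.
case: (ltnP m.+1 (syl_d l)) => H.
  have Hq := d1 _ H. have Hmm := Hm m m.+1 (leqnSn m).
  have Hc : m.+2 <= conj_part l (2 * m.+1).+1.
    have mk1 : m.+1 < size l.
      case: (ltnP m.+1 (size l)) => // H'; move: Hq; rewrite nth_default //.
    apply: conj_ge => // _; change (m.+2.-1) with m.+1; lia.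
  split; lia.
have Hd : syl_d l = m.+1 by lia.
have He : syl_eps l = false.
  move: Hi; rewrite /Ls Hd; case: (syl_eps l) => //; lia.
move: He; rewrite /syl_eps Hd e1 -/p => /eqP He.
have Hc : m.+1 <= conj_part l (2 * m.+1).+1.
  apply: conj_ge => // _; change (m.+1.-1) with m; lia.
split; lia.
Qed.

Lemma pdoubleE l : pdouble (Syl l) = mkseq (fun i => 2 * F l i) (Ls l).
Proof. by rewrite /pdouble SylE /mkseq -map_comp. Qed.

Lemma step l x : mono (rcons l x) -> all odd (rcons l x) ->
  ins x.+1./2 (pdouble (Syl l)) = pdouble (Syl (rcons l x)).
Proof.
move=> Hm /(all_nthP 0) Hodd.
set s := rcons l x. set k := size l.
have nthS i : nth 0 s i = if i < k then nth 0 l i else if i == k then x else 0.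
  exact: nth_rcons.
have sz : size s = k.+1 by rewrite size_rcons.
have Hml : mono l.
  move=> i j ij. case: (ltnP j k) => jk; last by rewrite nth_default.
  have := Hm i j ij; rewrite !nthS jk (leq_ltn_trans ij jk) //.
have xl j : j < k -> x <= nth 0 l j.
  move=> jk; have := Hm j k (ltnW jk); rewrite !nthS jk ltnn eqxx //.
have oddl j : j < k -> odd (nth 0 l j).
  move=> jk; have := Hodd j; rewrite sz nthS jk; apply; lia.
have oddx : odd x by have := Hodd k; rewrite sz nthS ltnn eqxx; apply.
set a := x.+1./2.
have xa : x = (2 * a).-1 /\ 0 < a by have := oddE oddx; rewrite /a; lia.
case: xa => xa a0.
have conjS c : conj_part s c = conj_part l c + (c <= x).
  by rewrite /conj_part /s -cats1 count_cat /= addn0.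
have [dl1 dl2] := dP Hml.
set d := syl_d l in dl1 dl2.
have dk : d <= k.
  case: (leqP d k) => // H; have := dl1 _ H; rewrite nth_default //.
have [b1 b2] := Ls_bounds l. rewrite -/d in b1 b2.
set L := Ls l in b1 b2.
have Fstep i : i < L -> F s i = F l i + (i < (2 * a).-1).
  move=> iL. have := odd_double_half i. case Oi: (odd i) => /= Ei.
    set m := i./2 in Ei. rewrite -mul2n in Ei. rewrite -Ei add1n in iL *.
    have [H1 H2 H3] := Fl_odd Hml oddl iL. rewrite -/d in H3.
    have e1 : part s m.+1 = nth 0 l m by rewrite /part /= nthS (_ : m < k); last lia.
    rewrite /F !Fn_odd in H1 H2 *. rewrite [syl_even s _]/syl_even e1 conjS. lia.
  set m := i./2 in Ei. rewrite -mul2n in Ei. rewrite -Ei add0n in iL *.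
  have [H1 H2 H3] := Fl_even Hml oddl iL. rewrite -/d in H3.
  have e1 : part s m.+1 = nth 0 l m by rewrite /part /= nthS (_ : m < k); last lia.
  have e2 : conj_part s (2 * m.+1).-1 = conj_part s (2 * m).+1 by congr conj_part; lia.
  rewrite /F !Fn_even in H1 H2 *. rewrite [syl_odd s _]/syl_odd e1 e2 conjS. lia.
have Fpos i : i < L -> 0 < F l i.
  move=> iL. have := odd_double_half i. case: (odd i) => /= Ei.
    rewrite -mul2n in Ei. rewrite -Ei add1n in iL *.
    by have [_ H2 _] := Fl_odd Hml oddl iL.
  rewrite -mul2n in Ei. rewrite -Ei add0n in iL *.
  by have [_ H2 _] := Fl_even Hml oddl iL.
have Fev j : j < d -> a <= F l (2 * j) + j.
  move=> jd. have iL : 2 * j < L by lia.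
  have [H1 _ _] := Fl_even Hml oddl iL.
  have jk : j < k by lia.
  have Hc : j.+1 <= conj_part l (2 * j).+1.
    apply: conj_ge => // _; change (j.+1.-1) with j; exact: dl1.
  have := xl _ jk. lia.
rewrite [pdouble (Syl s)]pdoubleE pdoubleE -/L.
set g := mkseq (fun i => 2 * F l i) L.
have szg : size g = L by rewrite size_mkseq.
have nthg i : nth 0 g i = if i < L then 2 * F l i else 0.
  case: ifP => H; first by rewrite nth_mkseq.
  by rewrite nth_default // szg leqNgt H.
have filt0 n : [seq y <- nseq n 0 | y != 0] = [::] by elim: n.
have conjAll c : c <= x -> conj_part s c = k.+1.
  move=> cx; rewrite -sz; apply: conj_all => j; rewrite sz nthS => jk.
  case: ifP => H; first by apply: leq_trans cx (xl _ H).
  have -> : j == k by lia.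
  done.
case: (leqP d.+2 a) => Hda.
-
  have dek : d = k.
    case: (ltngtP d k) => // H; last lia.
    have := xl _ H; lia.
  have eL : L = 2 * d.
    rewrite /L /Ls -/d. case E: (syl_eps l); last lia.
    move: E; rewrite /syl_eps /part -/d => /eqP E.
    case: (posnP d) => [d0|dpos]; first lia.
    have := xl d.-1; lia.
  have ds : syl_d s = k.+1.
    apply: d_unique => // [j jk|]; rewrite nthS; last by rewrite ifF; [rewrite ifF //; apply/negbTE; lia | apply/negbTE; lia].
    case: ifP => H; first by apply: dl1; lia.
    have -> : j == k by lia.
    lia.
  have es : syl_eps s = false.
    rewrite /syl_eps ds /part /= nthS ltnn eqxx; apply/eqP; lia.
  have Lss : Ls s = (2 * d).+2 by rewrite /Ls ds es; lia.
  have Ej : ins_j a g = d.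
    rewrite /ins_j; apply: find_iota_at; first lia.
      move=> j jd; rewrite nthg ifT; last lia.
      have := Fev _ jd; lia.
    move=> _; rewrite nthg ifF; last (apply/negbTE; lia).
    lia.
  rewrite /ins Ej. have -> : (d == a.-1) = false by apply/eqP; lia.
  rewrite take_size_cat; last lia.
  rewrite drop_size_cat; last lia.
  rewrite !filter_cat filt0 cats0.
  have -> : [seq y <- [seq x0 + 2 | x0 <- g] | y != 0] = [seq x0 + 2 | x0 <- g].
    by apply/all_filterP/allP => y /mapP [z _ ->]; rewrite addn2.
  have h1 : 2 * a - 2 * d != 0 by lia.
  have h2 : 2 * a - 2 * d - 2 != 0 by lia.
  rewrite /= h1 h2 Lss !mkseqS -!cats1 -catA /=.
  congr (_ ++ [:: _; _]).
  + rewrite /g /mkseq -map_comp eL; apply/eq_in_map => i; rewrite mem_iota => /andP [_ Hi] /=.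
    rewrite Fstep; last lia. lia.
  + rewrite /F Fn_even /syl_odd conjAll; last lia.
    rewrite /part /= nthS dek ltnn eqxx. lia.
  + rewrite /F Fn_odd /syl_even conjAll; last lia.
    rewrite /part /= nthS dek ltnn eqxx. lia.
-
  have Ej : ins_j a g = a.-1.
    rewrite /ins_j; apply: find_iota_at => [//| j ja | H]; last by rewrite ltnn in H.
    rewrite nthg ifT; last lia.
    have := Fev j; lia.
  rewrite /ins Ej eqxx.
  rewrite (_ : (2 * a.-1).+1 = (2 * a).-1); last lia.
  rewrite take_drop_mkseq; last by rewrite size_cat szg size_nseq; lia.
  rewrite size_cat szg size_nseq.
  have nthg' i : nth 0 (g ++ nseq (2 * a) 0) i = if i < L then 2 * F l i else 0.
    rewrite nth_cat szg nth_nseq nthg; case: ifP => //; by case: ifP.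
  case: (boolP ((a == d.+1) && (d == k))) => [/andP [/eqP ad /eqP dek] | HnII].
  +
    have eL : L = 2 * d.
      rewrite /L /Ls -/d. case E: (syl_eps l); last lia.
      move: E; rewrite /syl_eps /part -/d => /eqP E.
      case: (posnP d) => [d0|dpos]; first lia.
      have := xl d.-1; lia.
    have ds : syl_d s = k.+1.
      apply: d_unique => // [j jk|]; rewrite nthS; last by rewrite ifF; [rewrite ifF //; apply/negbTE; lia | apply/negbTE; lia].
      case: ifP => H; first by apply: dl1; lia.
      have -> : j == k by lia.
      lia.
    have es : syl_eps s = true.
      rewrite /syl_eps ds /part /= nthS ltnn eqxx; apply/eqP; lia.
    have Lss : Ls s = (2 * d).+1 by rewrite /Ls ds es; lia.
    rewrite (@filter_mkseq _ (Ls s)); first last.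
    * move=> i /andP [H1 H2]; rewrite nthg' ifF; [lia | apply/negbTE; lia].
    * move=> i Hi; rewrite nthg'; case: ifP => _; lia.
    * lia.
    apply: eq_in_mkseq => i Hi; rewrite nthg'.
    case: ifP => iL.
      rewrite Fstep //. lia.
    have -> : i = 2 * d by lia.
    rewrite /F Fn_even /syl_odd conjAll; last lia.
    rewrite /part /= nthS dek ltnn eqxx. lia.
  +
    have ad : a <= d.
      case: (leqP a d) => // H.
      have ad : a = d.+1 by lia.
      case: (ltngtP d k) => H'; last by rewrite ad H' !eqxx in HnII.
        have := xl _ H'; lia.
      lia.
    have ds : syl_d s = d.
      apply: d_unique => // [j jd|]; rewrite nthS.
        rewrite ifT; [exact: dl1 | lia].
      case: ifP => H; first exact: dl2.
      have -> : d == k by lia.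
      lia.
    have es : syl_eps s = syl_eps l.
      rewrite /syl_eps ds -/d /part nthS ifT //; lia.
    have Lss : Ls s = L by rewrite /Ls ds es.
    rewrite (@filter_mkseq _ (Ls s)); first last.
    * move=> i /andP [H1 H2]; rewrite nthg' ifF; [lia | apply/negbTE; lia].
    * move=> i Hi; rewrite nthg' ifT; [have := Fpos i; lia | lia].
    * lia.
    apply: eq_in_mkseq => i Hi; rewrite nthg' ifT; last lia.
    rewrite Fstep; lia.
Qed.

Theorem mainTheorem3 (n : nat) (lam : seq nat) :
  1 <= n -> in_O n lam ->
  in_O (2 * n) (psq lam) /\ Phi (psq lam) = pdouble (Syl lam).
Proof.
move=> _ /andP [/and3P [Hs Hp /eqP Hn] Ho].
split.
  by rewrite /in_O /is_partition sorted_psq // !all_psq Hp Ho sumn_psq Hn eqxx.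
rewrite /Phi phi_beta_psq B_nil phi_alpha_psq //.
elim/last_ind: lam Hs {Hp Hn} Ho => [|l x IH] Hs Ho; first by [].
have Hsl : sorted geq l by apply: (subseq_sorted geq_trans (subseq_rcons l x)).  
have Hol : all odd l by move: Ho; rewrite all_rcons => /andP [].
rewrite foldl_rcons IH //.
apply: step => //; exact: mono_sorted.
Qed.
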